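(* Haechi (described in the context) guarantees sharded system liveness: every transaction received by at least one honest node is eventually handled by the relevant shards and gets a response from the sharded system.
   Context: Setting. A sharded blockchain consists of shards $S_0,S_1,\dots,S_m$ ($S_0$ the beacon shard), each running a BFT state-machine-replication consensus and always satisfying $3f_i+1<|S_i|$ ($f_i$ Byzantine nodes out of $|S_i|$), hence each shard has intra-shard safety and intra-shard liveness (a transaction received by at least one honest node of the shard is eventually handled and answered by the shard); messages between honest parties are not dropped. OTXs are transactions calling order-sensitive contracts. Non-OTX transactions are handled by the underlying intra-shard consensus (intra-shard transactions) or by a two-phase cross-shard protocol (cross-shard transactions), which are assumed to provide responses. Haechi for OTXs: the sender shard processes an OTX in a block and forwards it in a certified CrossLink (block timestamp, OTX list, shard id, block height) to the beacon chain; the beacon chain, once it has received a consecutive-height CrossLink from every shard, selects all CrossLinks with timestamp at most the minimum over shards of the last received timestamp and orders their OTXs by block timestamp then in-block index (agreed by BFT consensus); contract shards execute called contracts in this order and return commit/abort results; the sender shard coordinates the final commit or abort and notifies related shards. *)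

(* Defs.v *)
(* An abstract execution model of a sharded blockchain
   running Haechi for order-sensitive transactions (OTXs).
   Shards are 'I_m.+1 (S_0 = ord0 is the beacon shard); time is nat. *)
From mathcomp Require Import all_boot.

Record run (m : nat) : Type := Run {
  tx_t : Type;
  is_otx : tx_t -> bool;                        (* calls an order-sensitive contract *)
  sender : tx_t -> 'I_m.+1;
  contract_shards : tx_t -> {set 'I_m.+1};      (* shards holding the called contracts *)
  related : tx_t -> {set 'I_m.+1};              (* shards that must handle the tx *)
  received : tx_t -> nat -> Prop;               (* some honest node of the sender shard
                                                   has received tx at time t *)
  handled : tx_t -> 'I_m.+1 -> nat -> Prop;
  responded : tx_t -> nat -> Prop;
  block_produced : 'I_m.+1 -> nat -> nat -> Prop; (* block (shard i, height h) committed at t *)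
  block_ts : 'I_m.+1 -> nat -> nat;
  in_block : tx_t -> 'I_m.+1 -> nat -> Prop;    (* tx is in the OTX list of block (i, h) *)
  crosslink_recv : 'I_m.+1 -> nat -> nat -> Prop; (* beacon has received the certified
                                                   CrossLink of block (i,h) by time t *)
  ordered : tx_t -> nat -> Prop;                (* beacon has ordered tx (BFT-agreed) at t *)
  contract_result : tx_t -> 'I_m.+1 -> nat -> Prop; (* contract shard c returned its
                                                   commit/abort result for tx at t *)
  finalized : tx_t -> nat -> Prop               (* sender shard decided final commit/abort *)
}.

Arguments tx_t {m} r.
Arguments is_otx {m} r.
Arguments sender {m} r.
Arguments contract_shards {m} r.
Arguments related {m} r.
Arguments received {m} r.
Arguments handled {m} r.
Arguments responded {m} r.
Arguments block_produced {m} r.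
Arguments block_ts {m} r.
Arguments in_block {m} r.
Arguments crosslink_recv {m} r.
Arguments ordered {m} r.
Arguments contract_result {m} r.
Arguments finalized {m} r.

Section Haechi.
Variables (m : nat) (R : run m).

Definition consecutive_upto (j : 'I_m.+1) (hj : nat) (t : nat) : Prop :=
  forall k, k <= hj -> crosslink_recv R j k t.

Definition beacon_selectable (i : 'I_m.+1) (h : nat) (t : nat) : Prop :=
  crosslink_recv R i h t /\
  forall j : 'I_m.+1, exists hj, consecutive_upto j hj t /\ block_ts R i h <= block_ts R j hj.

Record haechi_assumptions : Prop := {
  (* non-OTX transactions: intra-shard consensus / two-phase cross-shard
     protocol are assumed to provide responses *)
  nonotx_live : forall tx t, ~~ is_otx R tx -> received R tx t ->
    exists t', t <= t' /\ responded R tx t' /\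
      forall j, j \in related R tx -> exists tj, handled R tx j tj;
  (* intra-shard liveness of the sender shard: it processes the OTX in a block *)
  sender_live : forall tx t, is_otx R tx -> received R tx t ->
    exists h tb, in_block R tx (sender R tx) h /\
      block_produced R (sender R tx) h tb /\ t <= tb;
  chain_growth : forall i h, exists t, block_produced R i h t;
  ts_increasing : forall i h, block_ts R i h < block_ts R i h.+1;
  crosslink_delivery : forall i h t, block_produced R i h t ->
    exists t', t <= t' /\ crosslink_recv R i h t';
  crosslink_persist : forall i h t t', crosslink_recv R i h t -> t <= t' ->
    crosslink_recv R i h t';
  (* beacon ordering rule (agreed by BFT consensus of the beacon shard) *)
  beacon_order : forall tx i h t, is_otx R tx -> in_block R tx i h ->
    beacon_selectable i h t -> exists t', t <= t' /\ ordered R tx t';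
  contract_exec : forall tx t, is_otx R tx -> ordered R tx t ->
    forall c, c \in contract_shards R tx ->
      exists t', t <= t' /\ contract_result R tx c t';
  sender_coord : forall tx t to, is_otx R tx -> ordered R tx to -> to <= t ->
    (forall c, c \in contract_shards R tx -> exists tc, tc <= t /\ contract_result R tx c tc) ->
    exists t', t <= t' /\ finalized R tx t';
  sender_notify : forall tx t, is_otx R tx -> finalized R tx t ->
    (exists t', t <= t' /\ responded R tx t') /\
    forall j, j \in related R tx -> exists tj, t <= tj /\ handled R tx j tj
}.

Definition sharded_liveness : Prop :=
  forall tx t, received R tx t ->
    exists t', t <= t' /\ responded R tx t' /\
      forall j, j \in related R tx -> exists tj, handled R tx j tj.

End Haechi.

Arguments consecutive_upto {m} R j hj t.
Arguments beacon_selectable {m} R i h t.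
Arguments haechi_assumptions {m} R.
Arguments sharded_liveness {m} R.

(* Main.v *)
Require Import Defs.
From mathcomp Require Import all_boot.
From mathcomp Require Import zify.

Lemma common_time (m : nat) (P : 'I_m.+1 -> nat -> Prop) :
  (forall j t t', P j t -> t <= t' -> P j t') ->
  (forall j, exists t, P j t) -> exists T, forall j, P j T.
Proof.
move=> mono ex.
suff H : forall n, exists T, forall j : 'I_m.+1, j < n -> P j T.
  by have [T HT] := H m.+1; exists T => j; apply: HT.
elim=> [|n [T HT]]; first by exists 0.
case: (ltnP n m.+1) => Hn.
- have [t Ht] := ex (Ordinal Hn).
  exists (maxn T t) => j Hj.
  case: (ltnP j n) => Hjn.
  + apply: mono (HT j Hjn) _; lia.
  + have -> : j = Ordinal Hn by apply: val_inj => /=; lia.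
    apply: mono Ht _; lia.
- exists T => j Hj; apply: HT; have := ltn_ord j; lia.
Qed.

Lemma ts_ge (m : nat) (R : run m) : haechi_assumptions R ->
  forall j k, k <= block_ts R j k.
Proof.
move=> H j; elim=> [|k IH] //.
have := @ts_increasing _ _ H j k; lia.
Qed.

Theorem theorem3 (m : nat) (R : run m) :
  haechi_assumptions R -> sharded_liveness R.
Proof.
move=> H tx t Hrec.
case: (boolP (is_otx R tx)) => Hotx; last exact: (@nonotx_live _ _ H _ _ Hotx Hrec).
have [h [tb [Hin [Hprod Htb]]]] := @sender_live _ _ H _ _ Hotx Hrec.
set s := sender R tx in Hin Hprod.
set N := block_ts R s h.
have Hcl : exists T, forall j : 'I_m.+1, forall k, k <= N -> crosslink_recv R j k T.
  apply: (@common_time _ (fun j T => forall k, k <= N -> crosslink_recv R j k T)).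
    by move=> j T T' HP HT k Hk; apply: @crosslink_persist _ _ H _ _ _ _ (HP k Hk) HT.
  move=> j.
  suff : forall n, exists T, forall k, k < n -> crosslink_recv R j k T.
    by move=> /(_ N.+1) [T HT]; exists T => k Hk; apply: HT.
  elim=> [|n [T HT]]; first by exists 0.
  have [tp Hp] := @chain_growth _ _ H j n.
  have [t' [_ Ht']] := @crosslink_delivery _ _ H _ _ _ Hp.
  exists (maxn T t') => k Hk.
  case: (ltnP k n) => Hkn.
    by apply: @crosslink_persist _ _ H _ _ _ _ (HT k Hkn) _; lia.
  have -> : k = n by lia.
  by apply: @crosslink_persist _ _ H _ _ _ _ Ht' _; lia.
have [T HT] := Hcl.
have [t2 [Htb2 Hs2]] := @crosslink_delivery _ _ H _ _ _ Hprod.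
set t1 := maxn (maxn T t2) t.
have Hsel : beacon_selectable R s h t1.
  split; first by apply: @crosslink_persist _ _ H _ _ _ _ Hs2 _; lia.
  move=> j; exists N; split.
    by move=> k Hk; apply: @crosslink_persist _ _ H _ _ _ _ (HT j k Hk) _; lia.
  exact: ts_ge.
have [to [Hto Hord]] := @beacon_order _ _ H _ _ _ _ Hotx Hin Hsel.
have [Tc HTc] : exists Tc, forall c : 'I_m.+1, c \in contract_shards R tx ->
    exists tc, tc <= Tc /\ contract_result R tx c tc.
  apply: (@common_time _ (fun c T => c \in contract_shards R tx ->
    exists tc, tc <= T /\ contract_result R tx c tc)).
    move=> c T1 T2 HP HT12 Hc; have [tc [H1 H2]] := HP Hc.
    by exists tc; split => //; lia.
  move=> c; case: (boolP (c \in contract_shards R tx)) => Hc.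
    have [t' [_ Ht']] := @contract_exec _ _ H _ _ Hotx Hord _ Hc.
    by exists t' => _; exists t'.
  by exists 0.
have [tf [Htf Hfin]] := @sender_coord _ _ H _ (maxn Tc to) _ Hotx Hord (leq_maxr _ _)
  (fun c Hc => let: ex_intro tc (conj a b) := HTc c Hc in
     ex_intro _ tc (conj (leq_trans a (leq_maxl _ _)) b)).
have [[tr [Htr Hresp]] Hhand] := @sender_notify _ _ H _ _ Hotx Hfin.
exists tr; split; first lia.
split => // j Hj; have [tj [_ Htj]] := Hhand j Hj; by exists tj.
Qed.
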